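(* Let $p$ be an odd prime and $G_1=\langle a\rangle+\langle b\rangle+\langle c\rangle$ the additively written group with $ap=bp=cp=0$, $a+b=b+a+c$, $c$ central; write elements as $x=ax_1+bx_2+cx_3$ ($0\le x_i<p$). For maps $\beta,\gamma\colon G_1\to\mathbb Z_p$ define $$x\cdot y=ax_1y_1+b(x_2y_1+\beta(x)y_2)+c\Big(-x_1x_2\tbinom{y_1}{2}+x_3y_1+\gamma(x)y_2+x_1\beta(x)y_3\Big).$$ Then each of the following choices of $(\beta,\gamma)$ occurs as the pair of maps of a local nearring $(G_1,+,\cdot)$ with identity $a$ (where $x\cdot b=b\beta(x)+c\gamma(x)$): 1) $\beta(x)=x_1^{\,i}$ and $\gamma(x)=0$, for $0<i<p$; 2) $\beta(x)=1$ and $\gamma(x)=0$; 3) $\beta(x)=x_1^2$ and $\gamma(x)=x_1x_2$.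
   Context: A (left) nearring is a set $R$ with operations $+,\cdot$ such that $(R,+)$ is a group, $(R,\cdot)$ a semigroup, and $x(y+z)=xy+xz$ for all $x,y,z$. A nearring with identity is local if its non-invertible elements form a subgroup of $(R,+)$. Additive notation: $gk$ is $g$ added $k$ times; coefficients are read modulo $p$. *)

(* Defs.v *)
From mathcomp Require Import all_boot all_order all_algebra.
Set Implicit Arguments. Unset Strict Implicit. Unset Printing Implicit Defensive.
Import GRing.Theory.
Local Open Scope ring_scope.

Section Nearring.
Variable T : Type.
Variables (add : T -> T -> T) (zero : T) (opp : T -> T) (mul : T -> T -> T).

Definition is_nearring : Prop :=
  [/\ associative add, left_id zero add, right_id zero add,
      left_inverse zero opp add & right_inverse zero opp add] /\
  associative mul /\
  (forall x y z, mul x (add y z) = add (mul x y) (mul x z)).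

Definition is_identity (e : T) : Prop := forall x, mul e x = x /\ mul x e = x.

Definition invertible (e x : T) : Prop := exists y, mul x y = e /\ mul y x = e.

Definition is_additive_subgroup (S : T -> Prop) : Prop :=
  [/\ S zero, (forall x y, S x -> S y -> S (add x y)) & (forall x, S x -> S (opp x))].

Definition is_local_nearring_with_identity (e : T) : Prop :=
  [/\ is_nearring, is_identity e & is_additive_subgroup (fun x => ~ invertible e x)].
End Nearring.

(* The group G_1: x = a x1 + b x2 + c x3 is encoded as ((x1, x2), x3). *)
Definition G1 (p : nat) : Type := ('F_p * 'F_p * 'F_p)%type.

Definition c1 {p} (x : G1 p) : 'F_p := x.1.1.
Definition c2 {p} (x : G1 p) : 'F_p := x.1.2.
Definition c3 {p} (x : G1 p) : 'F_p := x.2.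

Definition mkG {p} (x1 x2 x3 : 'F_p) : G1 p := ((x1, x2), x3).

(* Since b x2 + a y1 = a y1 + b x2 - c x2 y1 (from a + b = b + a + c, c central):
   x + y = a(x1+y1) + b(x2+y2) + c(x3+y3 - x2 y1). *)
Definition G1add {p} (x y : G1 p) : G1 p :=
  mkG (c1 x + c1 y) (c2 x + c2 y) (c3 x + c3 y - c2 x * c1 y).
Definition G1zero {p} : G1 p := mkG 0 0 0.
Definition G1opp {p} (x : G1 p) : G1 p :=
  mkG (- c1 x) (- c2 x) (- c3 x - c1 x * c2 x).
Definition G1a {p} : G1 p := mkG 1 0 0.

(* binom(y1, 2) read modulo p, with 0 <= y1 < p the representative *)
Definition G1mul {p} (beta gamma : G1 p -> 'F_p) (x y : G1 p) : G1 p :=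
  mkG (c1 x * c1 y)
      (c2 x * c1 y + beta x * c2 y)
      (- (c1 x * c2 x * ('C(nat_of_ord (c1 y), 2))%:R) + c3 x * c1 y
        + gamma x * c2 y + c1 x * beta x * c3 y).

Definition G1_local_nearring {p} (beta gamma : G1 p -> 'F_p) : Prop :=
  is_local_nearring_with_identity G1add G1zero G1opp (G1mul beta gamma) G1a.

(* Main.v *)
Require Import Defs.
From mathcomp Require Import all_boot all_order all_algebra.
From mathcomp Require Import ring.
Import GRing.Theory.
Local Open Scope ring_scope.

Section Aux.
Variable p : nat.
Hypothesis hp : prime p.
Hypothesis hodd : odd p.

Lemma two_nz : (2 : 'F_p) != 0.
Proof.
rewrite -[2]/(2%:R) -(dvdn_pcharf (pchar_Fp hp)).
apply/negP => /(dvdn_leq (isT : (0 < 2)%N)).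
move: (prime_gt1 hp) hodd; case: p => [|[|[|]]] //.
Qed.

Lemma binR (R : comNzRingType) (n : nat) : ('C(n, 2))%:R * 2 = n%:R * (n%:R - 1) :> R.
Proof.
elim: n => [|n IH]; first by rewrite bin0n mul0r mul0r.
rewrite binS bin1 natrD mulrDl IH -addn1 natrD; ring.
Qed.

Lemma binF (y : 'F_p) : ('C(nat_of_ord y, 2))%:R = y * (y - 1) / 2 :> 'F_p.
Proof.
have h2 := two_nz.
have := binR 'F_p (nat_of_ord y).
rewrite (natr_Zp y) => <-. field. exact: h2.
Qed.

Ltac unf := rewrite /G1mul /G1add /G1opp /G1zero /G1a /mkG /c1 /c2 /c3; rewrite ?binF /=.

Lemma distr (beta gamma : G1 p -> 'F_p) (x y z : G1 p) :
  G1mul beta gamma x (G1add y z) = G1add (G1mul beta gamma x y) (G1mul beta gamma x z).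
Proof.
have h2 := two_nz.
case: x => [[x1 x2] x3]; case: y => [[y1 y2] y3]; case: z => [[z1 z2] z3].
unf; congr ((_, _), _); field; first [done | exact: h2].
Qed.

Lemma generic (beta gamma : G1 p -> 'F_p) :
  associative (G1mul beta gamma) -> beta G1a = 1 -> gamma G1a = 0 ->
  (forall x, c1 x != 0 -> beta x != 0) -> G1_local_nearring beta gamma.
Proof.
move=> hA hb hg hnz.
have h2 := two_nz.
have hid : is_identity (G1mul beta gamma) G1a.
  move=> [[x1 x2] x3]; split.
    move: hb hg; unf => -> ->; congr ((_, _), _); ring.
  unf; congr ((_, _), _); field; first [done | exact: h2].
have inj : forall x, c1 x != 0 -> injective (G1mul beta gamma x).
  move=> x hx [[y1 y2] y3] [[z1 z2] z3].
  have hbx := hnz x hx.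
  case: x hx hbx => [[x1 x2] x3] hx hbx.
  rewrite /c1 /= in hx; move=> e; have e1 := congr1 c1 e; have e2 := congr1 c2 e; have e3 := congr1 c3 e; rewrite /G1mul /mkG /c1 /c2 /c3 /= in e1 e2 e3.
  have E1 : y1 = z1 by exact: (mulfI hx e1).
  rewrite E1 in e2 e3; move/addrI: e2 => e2.
  have E2 : y2 = z2 by apply: (mulfI hbx).
  rewrite E2 in e3; move/addrI: e3 => e3.
  have E3 : y3 = z3 by apply: (mulfI (mulf_neq0 hx hbx)).
  by rewrite E1 E2 E3.
have rinv : forall x, c1 x != 0 -> exists y, G1mul beta gamma x y = G1a.
  move=> x hx.
  have := @inj_card_onto (('F_p * 'F_p * 'F_p)%type) (('F_p * 'F_p * 'F_p)%type) _ (inj x hx) (leqnn _) G1a.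
  by case/codomP => y ->; exists y.
have invE : forall x, invertible (G1mul beta gamma) G1a x <-> c1 x != 0.
  move=> x; split.
    case=> y [e _]; have := congr1 c1 e; case: x {e} => [[x1 x2] x3]; case: y => [[y1 y2] y3].
    rewrite /G1mul /G1a /mkG /c1 /= => e; apply/eqP => h; move: e; rewrite h mul0r.
    by move/eqP; rewrite eq_sym oner_eq0.
  move=> hx; have [y hy] := rinv x hx.
  have hy1 : c1 y != 0.
    apply/eqP => h; move: (congr1 c1 hy); case: x {hx hy} => [[x1 x2] x3]; case: y h => [[y1 y2] y3]; rewrite /c1 /= => ->.
    by rewrite /G1mul /G1a /mkG /= mulr0 => /eqP; rewrite eq_sym oner_eq0.
  have [z hz] := rinv y hy1.
  exists y; split => //.
  suff -> : x = z by [].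
  rewrite -{1}(proj2 (hid x)) -hz hA hy; exact: (proj1 (hid z)).
split.
- split; last split.
  + split.
    * move=> [[x1 x2] x3] [[y1 y2] y3] [[z1 z2] z3]; unf; congr ((_, _), _); ring.
    * move=> [[x1 x2] x3]; unf; congr ((_, _), _); ring.
    * move=> [[x1 x2] x3]; unf; congr ((_, _), _); ring.
    * move=> [[x1 x2] x3]; unf; congr ((_, _), _); ring.
    * move=> [[x1 x2] x3]; unf; congr ((_, _), _); ring.
  + exact: hA.
  + exact: distr.
- exact: hid.
- split.
  + by move/invE; rewrite /c1 /=.
  + move=> x y hx hy /invE; move: hx hy; rewrite !invE => /negP/negPn/eqP hx /negP/negPn/eqP hy; rewrite /G1add /mkG /c1 /= in hx hy *; by rewrite hx hy addr0.
  + move=> x hx /invE; move: hx; rewrite !invE => /negP/negPn/eqP hx; rewrite /G1opp /mkG /c1 /= in hx *; by rewrite hx oppr0.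
Qed.

End Aux.

Theorem lemma8 (p : nat) (hp : prime p) (hodd : odd p) :
  [/\ (forall i : nat, (0 < i < p)%N ->
         G1_local_nearring (fun x : G1 p => c1 x ^+ i) (fun _ => 0)),
      G1_local_nearring (fun _ : G1 p => 1) (fun _ => 0) &
      G1_local_nearring (fun x : G1 p => c1 x ^+ 2) (fun x => c1 x * c2 x)].
Proof.
have h2 := @two_nz p hp hodd.
split.
- move=> i hi; apply: (@generic p hp hodd) => //.
  + move=> [[x1 x2] x3] [[y1 y2] y3] [[z1 z2] z3].
    rewrite /G1mul /mkG /c1 /c2 /c3 !(@binF p hp hodd) /= !exprMn.
    congr ((_, _), _); field; first [done | exact: h2].
  + by rewrite /c1 /= expr1n.
  + by move=> x hx; rewrite expf_neq0.
- apply: (@generic p hp hodd) => //.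
  + move=> [[x1 x2] x3] [[y1 y2] y3] [[z1 z2] z3].
    rewrite /G1mul /mkG /c1 /c2 /c3 !(@binF p hp hodd) /=.
    congr ((_, _), _); field; first [done | exact: h2].
- apply: (@generic p hp hodd) => //.
  + move=> [[x1 x2] x3] [[y1 y2] y3] [[z1 z2] z3].
    rewrite /G1mul /mkG /c1 /c2 /c3 !(@binF p hp hodd) /=.
    congr ((_, _), _); field; first [done | exact: h2].
  + by rewrite /c1 /= expr1n.
  + by rewrite /c1 /c2 /= mul1r.
  + by move=> x hx; rewrite expf_neq0.
Qed.
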